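(* Let $n\ge 2$ and let $(W_r)_{r\in\mathbb Z}$ be a generalized $n$-step Fibonacci sequence. Then for every integer $r$ and every non-negative integer $k$, \[ \sum_{j=0}^k(-1)^jW_{r-k+j}+(n\bmod 2)\sum_{j=0}^k(-1)^jW_{r-k-n-1+j} =(-1)^k\sum_{j=1}^{\lceil n/2\rceil}W_{r-2j+1}+\sum_{j=1}^{\lceil n/2\rceil}W_{r-2j-k}. \]
   Context: Fix an integer $n\ge 2$. A generalized $n$-step Fibonacci sequence is a two-sided sequence $(W_r)_{r\in\mathbb Z}$ of complex numbers satisfying $W_r=\sum_{i=1}^n W_{r-i}$ for all $r\in\mathbb Z$. $\lceil q\rceil$ denotes the least integer $\ge q$, and $n\bmod 2\in\{0,1\}$. *)

(* Defs.v *)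
From HB Require Import structures.
From mathcomp Require Import all_boot all_order all_algebra.
Set Implicit Arguments. Unset Strict Implicit. Unset Printing Implicit Defensive.
Import Order.TTheory GRing.Theory Num.Theory.
Local Open Scope ring_scope.

Definition is_gen_fib (C : ringType) (n : nat) (W : int -> C) : Prop :=
  forall r : int, W r = \sum_(1 <= i < n.+1) W (r - i%:Z).

(* Main.v *)
Require Import Defs.
From HB Require Import structures.
From mathcomp Require Import all_boot all_order all_algebra.
From mathcomp Require Import zify ring.
Import Order.TTheory GRing.Theory Num.Theory.
Local Open Scope ring_scope.

Lemma pair_sum (C : nzRingType) (W : int -> C) (t : int) (p : nat) :
  \sum_(1 <= j < p.+1) (W (t - 2 * j%:Z + 1) + W (t - 2 * j%:Z))
  = \sum_(1 <= i < (p.*2).+1) W (t - i%:Z).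
Proof.
elim: p => [|p IH]; first by rewrite !big_geq.
rewrite big_nat_recr //= IH doubleS (big_nat_recr p.*2.+2) // (big_nat_recr p.*2.+1) //= -addrA; congr (_ + (_ + _)).
  by congr W; lia.
by congr W; lia.
Qed.

Lemma key (C : nzRingType) (n : nat) (W : int -> C) (hW : is_gen_fib n W) (t : int) :
  \sum_(1 <= j < (uphalf n).+1) (W (t - 2 * j%:Z + 1) + W (t - 2 * j%:Z))
  = W t + (odd n)%:R * W (t - n%:Z - 1).
Proof.
rewrite pair_sum hW.
case: (boolP (odd n)) => on.
  have -> : (uphalf n).*2 = n.+1 by rewrite uphalf_half on; move: (odd_double_half n); rewrite on; lia.
  rewrite big_nat_recr //= mul1r; congr (_ + W _); lia.
have -> : (uphalf n).*2 = n by rewrite uphalf_half (negbTE on); move: (odd_double_half n); rewrite (negbTE on); lia.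
by rewrite mul0r addr0.
Qed.

Lemma Srec (C : nzRingType) (f : int -> C) (a : int) (k : nat) :
  \sum_(0 <= j < k.+2) (-1) ^+ j * f (a - (k.+1)%:Z + j%:Z)
  = f (a - (k.+1)%:Z) - \sum_(0 <= j < k.+1) (-1) ^+ j * f (a - k%:Z + j%:Z).
Proof.
rewrite big_nat_recl // expr0 mul1r addr0 -sumrN; congr (_ + _).
apply: eq_bigr => j _; rewrite exprS mulN1r mulNr; congr (- (_ * f _)); lia.
Qed.

Lemma alg (C : comNzRingType) (o S1 S2 A B0 B1 w1 w2 s : C) :
  S1 + o * S2 = s * A + B0 -> B0 + B1 = w1 + o * w2 ->
  w1 - S1 + o * (w2 - S2) = -1 * s * A + B1.
Proof. move=> H1 H2.
have -> : w1 - S1 + o * (w2 - S2) = (w1 + o * w2) - (S1 + o * S2) by ring.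
rewrite H1 -H2; ring.
Qed.

(* ceil(n/2) = uphalf n ;  n mod 2 = odd n *)
Theorem mainTheorem4 (C : numClosedFieldType) (n : nat) (hn : (2 <= n)%N)
  (W : int -> C) (hW : is_gen_fib n W) (r : int) (k : nat) :
  \sum_(0 <= j < k.+1) (-1) ^+ j * W (r - k%:Z + j%:Z)
  + (odd n)%:R * \sum_(0 <= j < k.+1) (-1) ^+ j * W (r - k%:Z - n%:Z - 1 + j%:Z)
  = (-1) ^+ k * \sum_(1 <= j < (uphalf n).+1) W (r - 2 * j%:Z + 1)
    + \sum_(1 <= j < (uphalf n).+1) W (r - 2 * j%:Z - k%:Z).
Proof.
have ev2 : forall kk : nat, \sum_(0 <= j < kk.+1) (-1) ^+ j * W (r - kk%:Z - n%:Z - 1 + j%:Z)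
   = \sum_(0 <= j < kk.+1) (-1) ^+ j * W ((r - n%:Z - 1) - kk%:Z + j%:Z).
  by move=> kk; apply: eq_bigr => j _; congr (_ * W _); lia.
rewrite ev2.
elim: k => [|k IH].
  rewrite !big_nat1 !expr0 !mul1r.
  have E0 : \sum_(1 <= j < (uphalf n).+1) W (r - 2 * j%:Z - 0%:Z)
     = \sum_(1 <= j < (uphalf n).+1) W (r - 2 * j%:Z) by apply: eq_bigr => j _; congr W; lia.
  rewrite E0; have := @key _ _ _ hW r; rewrite big_split /= => ->.
  congr (W _ + _ * W _); lia.
rewrite !Srec.
have K := @key _ _ _ hW (r - (k.+1)%:Z).
rewrite big_split /= in K.
have E1 : \sum_(1 <= j < (uphalf n).+1) W (r - (k.+1)%:Z - 2 * j%:Z + 1)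
   = \sum_(1 <= j < (uphalf n).+1) W (r - 2 * j%:Z - k%:Z).
  by apply: eq_bigr => j _; congr W; lia.
have E2 : \sum_(1 <= j < (uphalf n).+1) W (r - (k.+1)%:Z - 2 * j%:Z)
   = \sum_(1 <= j < (uphalf n).+1) W (r - 2 * j%:Z - (k.+1)%:Z).
  by apply: eq_bigr => j _; congr W; lia.
have E3 : W (r - n%:Z - 1 - (k.+1)%:Z) = W (r - (k.+1)%:Z - n%:Z - 1) by congr W; lia.
rewrite E1 E2 in K; rewrite E3.
rewrite exprS; exact: (@alg C _ _ _ _ _ _ _ _ _ IH K).
Qed.
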